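(* For every $n\ge3$, choose a uniformly random pair (plane tree $T$ on $n$ vertices, unordered pair of distinct leaves of $T$). The expected distance between the two leaves is $$\frac{(2n-4)!!}{2\,(2n-5)!!}+1=\frac{\sqrt{\pi n}}{2}+1-\frac{7\sqrt\pi}{16\sqrt n}+O\Bigl(\frac1{n^{3/2}}\Bigr).$$
   Context: General (plane) trees are rooted trees in which each vertex may have any number of children, linearly ordered. A leaf is a vertex with no children. Distance means the number of edges on the connecting path. The double factorials are $(2m)!!=2\cdot4\cdots(2m)$ and $(2m-1)!!=1\cdot3\cdots(2m-1)$, with $(-1)!!=1$. *)

(* Defs.v *)
From Stdlib Require Import Reals Lra Arith List.
Import ListNotations.
Open Scope R_scope.

Inductive ptree : Type := Node : list ptree -> ptree.

Fixpoint tsize (t : ptree) : nat :=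
  match t with
  | Node ts => S (fold_right (fun c acc => (tsize c + acc)%nat) 0%nat ts)
  end.

(** A vertex is identified by its address: the sequence of child indices
    on the path from the root.  [leaves t] lists the addresses of the
    leaves (vertices without children), each exactly once. *)
Fixpoint leaves (t : ptree) : list (list nat) :=
  match t with
  | Node [] => [ [] ]
  | Node ts =>
      (fix go (i : nat) (l : list ptree) : list (list nat) :=
         match l with
         | [] => []
         | c :: l' => map (cons i) (leaves c) ++ go (S i) l'
         end) 0%nat ts
  end.

(** Length of the longest common prefix of two addresses
    (= depth of the lowest common ancestor). *)
Fixpoint lcp (a b : list nat) : nat :=
  match a, b with
  | x :: a', y :: b' => if Nat.eqb x y then S (lcp a' b') else 0%nat
  | _, _ => 0%nat
  end.

Definition tdist (a b : list nat) : nat :=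
  (length a + length b - 2 * lcp a b)%nat.

Fixpoint pair_dist_sum (l : list (list nat)) : nat :=
  match l with
  | [] => 0%nat
  | x :: r => (fold_right (fun y acc => tdist x y + acc) 0%nat r + pair_dist_sum r)%nat
  end.

Fixpoint pair_count {A : Type} (l : list A) : nat :=
  match l with
  | [] => 0%nat
  | _ :: r => (length r + pair_count r)%nat
  end.

Definition total_dist (L : list ptree) : nat :=
  fold_right (fun t acc => (pair_dist_sum (leaves t) + acc)%nat) 0%nat L.
Definition total_pairs (L : list ptree) : nat :=
  fold_right (fun t acc => (pair_count (leaves t) + acc)%nat) 0%nat L.

Definition expected_leaf_dist (L : list ptree) : R :=
  INR (total_dist L) / INR (total_pairs L).

Fixpoint dfact (m : nat) : nat :=
  match m with
  | 0%nat => 1%nat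
  | 1%nat => 1%nat
  | S (S k as p) => (m * dfact k)%nat
  end.

Definition closed_form (n : nat) : R :=
  INR (dfact (2 * n - 4)) / (2 * INR (dfact (2 * n - 5))) + 1.

Definition asymp_main (n : nat) : R :=
  sqrt (PI * INR n) / 2 + 1 - 7 * sqrt PI / (16 * sqrt (INR n)).

(* Main.v *)
Require Import Defs.
From Stdlib Require Import Reals List Lia Lra Arith Permutation.
Import ListNotations.
From mathcomp Require all_boot all_algebra ring lra.
From Coquelicot Require Coquelicot.
Open Scope nat_scope.

Fixpoint go (i : nat) (l : list ptree) : list (list nat) :=
  match l with
  | [] => []
  | c :: l' => map (cons i) (leaves c) ++ go (S i) l'
  end.

Definition addhead (i : nat) (a : list nat) : list nat :=
  match a with [] => [] | j :: a' => (i + j) :: a' end.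

Lemma go_shift : forall f i, go i f = map (addhead i) (go 0 f).
Proof.
  induction f as [|c l IH]; intros i; [reflexivity|].
  simpl. rewrite map_app, map_map. f_equal.
  - apply map_ext. intros a. simpl. rewrite Nat.add_0_r. reflexivity.
  - rewrite (IH (S i)), (IH 1), map_map. apply map_ext.
    intros [|j a]; simpl; [reflexivity|]. f_equal. lia.
Qed.

Definition join (t r : ptree) : ptree := match r with Node f => Node (t :: f) end.

Lemma leaves_join t r : leaves (join t r) =
  map (cons 0) (leaves t) ++ (match r with Node [] => [] | _ => map (addhead 1) (leaves r) end).
Proof.
  destruct r as [[|c l]].
  - reflexivity.
  - transitivity (map (cons 0) (leaves t) ++ go 1 (c :: l)); [reflexivity|].
    rewrite go_shift. reflexivity.
Qed.

Definition hsum (X : list (list nat)) : nat := fold_right (fun a acc => length a + acc) 0 X.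
Definition cross (X Y : list (list nat)) : nat :=
  fold_right (fun x acc => fold_right (fun y acc2 => tdist x y + acc2) 0 Y + acc) 0 X.

Lemma fold_sum_app {A} (g : A -> nat) X Y :
  fold_right (fun y acc => g y + acc) 0 (X ++ Y) =
  fold_right (fun y acc => g y + acc) 0 X + fold_right (fun y acc => g y + acc) 0 Y.
Proof. induction X; simpl; lia. Qed.

Lemma fold_sum_map {A B} (g : B -> nat) (h : A -> B) X :
  fold_right (fun y acc => g y + acc) 0 (map h X) =
  fold_right (fun y acc => g (h y) + acc) 0 X.
Proof. induction X; simpl; lia. Qed.

Lemma fold_sum_ext {A} (g h : A -> nat) X : (forall x, g x = h x) ->
  fold_right (fun y acc => g y + acc) 0 X = fold_right (fun y acc => h y + acc) 0 X.
Proof. intros E; induction X; simpl; [reflexivity|]. rewrite E, IHX. reflexivity. Qed.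

Lemma fold_sum_ext_in {A} (g h : A -> nat) X : (forall x, In x X -> g x = h x) ->
  fold_right (fun y acc => g y + acc) 0 X = fold_right (fun y acc => h y + acc) 0 X.
Proof. intros E; induction X; simpl; [reflexivity|]. rewrite E, IHX; auto.
  intros; apply E; simpl; auto. simpl; auto. Qed.

Lemma fold_sum_plus {A} (g h : A -> nat) X :
  fold_right (fun y acc => (g y + h y) + acc) 0 X =
  fold_right (fun y acc => g y + acc) 0 X + fold_right (fun y acc => h y + acc) 0 X.
Proof. induction X; simpl; lia. Qed.

Lemma fold_sum_mull {A} c (g : A -> nat) X :
  fold_right (fun y acc => c * g y + acc) 0 X = c * fold_right (fun y acc => g y + acc) 0 X.
Proof. induction X; simpl; lia. Qed.

Lemma fold_sum_mulr {A} c (g : A -> nat) X :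
  fold_right (fun y acc => g y * c + acc) 0 X = fold_right (fun y acc => g y + acc) 0 X * c.
Proof. induction X; simpl; lia. Qed.

Lemma fold_sum_const {A} c (X : list A) :
  fold_right (fun y acc => c + acc) 0 X = c * length X.
Proof. induction X; simpl; lia. Qed.

Lemma pds_app X Y : pair_dist_sum (X ++ Y) = pair_dist_sum X + pair_dist_sum Y + cross X Y.
Proof.
  induction X as [|x X IH]; simpl; [lia|].
  rewrite (fold_sum_app (fun y => tdist x y)), IH. unfold cross; simpl. lia.
Qed.

Lemma pc_app {A} (X Y : list A) : pair_count (X ++ Y) = pair_count X + pair_count Y + length X * length Y.
Proof. induction X as [|x X IH]; simpl; [lia|]. rewrite length_app, IH. nia. Qed.

Lemma pds_map f X : (forall a b, tdist (f a) (f b) = tdist a b) ->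
  pair_dist_sum (map f X) = pair_dist_sum X.
Proof.
  intros E; induction X as [|x X IH]; simpl; [reflexivity|].
  rewrite (fold_sum_map (fun y => tdist (f x) y)), IH.
  rewrite (fold_sum_ext (fun y => tdist (f x) (f y)) (fun y => tdist x y)); auto.
Qed.

Lemma pc_map {A B} (f : A -> B) X : pair_count (map f X) = pair_count X.
Proof. induction X; simpl; [reflexivity|]. rewrite length_map, IHX. reflexivity. Qed.

Lemma lcp_le a b : lcp a b <= length a /\ lcp a b <= length b.
Proof.
  revert b; induction a as [|x a IH]; intros [|y b]; simpl; try lia.
  destruct (Nat.eqb x y); [|lia]. specialize (IH b). lia.
Qed.

Lemma tdist_cons0 a b : tdist (0 :: a) (0 :: b) = tdist a b.
Proof. unfold tdist; simpl. lia. Qed.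

Lemma tdist_addhead a b : tdist (addhead 1 a) (addhead 1 b) = tdist a b.
Proof. destruct a, b; reflexivity. Qed.

Lemma tdist_cross a b : tdist (0 :: a) (addhead 1 b) = S (length a) + length b.
Proof. destruct b; unfold tdist; simpl; lia. Qed.

Lemma hsum_cons0 A : hsum (map (cons 0) A) = hsum A + length A.
Proof. induction A; simpl; [reflexivity|]. unfold hsum in *; simpl. lia. Qed.

Lemma hsum_addhead B : hsum (map (addhead 1) B) = hsum B.
Proof. induction B as [|b B IH]; [reflexivity|]. unfold hsum in *; simpl. rewrite IH.
  destruct b; reflexivity. Qed.

Lemma cross_join A B : cross (map (cons 0) A) (map (addhead 1) B) =
  (hsum A + length A) * length B + length A * hsum B.
Proof.
  unfold cross. rewrite fold_sum_map.
  rewrite (fold_sum_ext _ (fun a => S (length a) * length B + hsum B)).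
  - rewrite fold_sum_plus, fold_sum_mulr, fold_sum_const.
    unfold hsum. rewrite (fold_sum_ext (fun a => S (length a)) (fun a => 1 + length a)) by reflexivity.
    rewrite fold_sum_plus, fold_sum_const. lia.
  - intros a. rewrite fold_sum_map.
    rewrite (fold_sum_ext _ (fun b => S (length a) + length b)) by (intros; apply tdist_cross).
    rewrite fold_sum_plus, fold_sum_const. unfold hsum. lia.
Qed.

Definition Lst (t : ptree) := length (leaves t).
Definition Hst (t : ptree) := hsum (leaves t).
Definition Dst (t : ptree) := pair_dist_sum (leaves t).
Definition Pst (t : ptree) := pair_count (leaves t).
Definition Sst (t : ptree) := match t with Node [] => 1 | _ => 0 end.
Definition Tst (t : ptree) := 1.

Lemma stat_join t r :
  Lst (join t r) + Sst r = Lst t + Lst r /\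
  Hst (join t r) = Hst t + Lst t + Hst r /\
  Pst (join t r) + Sst r * Lst t = Pst t + Pst r + Lst t * Lst r /\
  Dst (join t r) + Sst r * (Hst t + Lst t) = Dst t + Dst r + (Hst t + Lst t) * Lst r + Lst t * Hst r.
Proof.
  unfold Lst, Hst, Pst, Dst. rewrite leaves_join.
  destruct r as [[|c l]]; simpl Sst.
  - rewrite app_nil_r. change (leaves (Node [])) with [@nil nat].
    rewrite length_map, hsum_cons0, pc_map, pds_map by apply tdist_cons0.
    simpl. unfold hsum; simpl. lia.
  - set (R := leaves (Node (c :: l))).
    rewrite length_app, !length_map. unfold hsum at 1. rewrite fold_sum_app.
    fold (hsum (map (cons 0) (leaves t))). fold (hsum (map (addhead 1) R)).
    rewrite hsum_cons0, hsum_addhead, pc_app, !pc_map, !length_map, pds_app,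
      cross_join, !pds_map by (apply tdist_cons0 || apply tdist_addhead).
    repeat split; lia.
Qed.

Fixpoint enum (fuel n : nat) : list ptree :=
  match fuel with
  | 0 => []
  | S fu => match n with
     | 0 => []
     | 1 => [Node []]
     | _ => flat_map (fun k => flat_map (fun t => map (join t) (enum fu (n - k))) (enum fu k))
              (seq 1 (n - 1))
     end
  end.

Lemma tsize_pos t : 1 <= tsize t.
Proof. destruct t; simpl; lia. Qed.

Lemma tsize_join t r : tsize (join t r) = tsize t + tsize r.
Proof. destruct r; simpl. lia. Qed.

Lemma join_inj t r t' r' : join t r = join t' r' -> t = t' /\ r = r'.
Proof. destruct r, r'; simpl; intros H; injection H; intros; subst; auto. Qed.

Lemma NoDup_flat_map {A B} (g : A -> list B) l : NoDup l -> (forall x, In x l -> NoDup (g x)) ->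
  (forall x y z, In x l -> In y l -> In z (g x) -> In z (g y) -> x = y) -> NoDup (flat_map g l).
Proof.
  induction l as [|a l IH]; intros Hl Hg Hd; simpl; [constructor|].
  apply NoDup_cons_iff in Hl as [Ha Hl].
  apply NoDup_app.
  - apply Hg; simpl; auto.
  - apply IH; auto; intros; [apply Hg; simpl; auto|]. eapply Hd; simpl; eauto.
  - intros z Hz Hz'. apply in_flat_map in Hz' as [y [Hy Hzy]].
    assert (a = y) by (eapply Hd; simpl; eauto). subst. contradiction.
Qed.

Lemma enum_ok : forall fu n, n <= fu ->
  (forall t, In t (enum fu n) <-> tsize t = n) /\ NoDup (enum fu n).
Proof.
  induction fu as [|fu IH]; intros n Hn.
  - assert (n = 0) by lia; subst. simpl. split; [|constructor].
    intros t; split; [tauto|]. pose proof (tsize_pos t); lia.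
  - destruct n as [|[|m]].
    + simpl. split; [|constructor]. intros t; split; [tauto|]. pose proof (tsize_pos t); lia.
    + simpl. split; [|repeat constructor; simpl; tauto].
      intros [f]; split.
      * intros [H|[]]. rewrite <- H. reflexivity.
      * destruct f as [|c l]; [simpl; auto|]. simpl. pose proof (tsize_pos c). lia.
    + cbv beta iota delta [enum]. fold enum. split.
      * intros t. rewrite in_flat_map. split.
        -- intros [k [Hk Ht]]. apply in_seq in Hk.
           apply in_flat_map in Ht as [t1 [Ht1 Ht]]. apply in_map_iff in Ht as [r [<- Hr]].
           apply (IH k) in Ht1; [|lia]. apply (IH (S (S m) - k)) in Hr; [|lia].
           rewrite tsize_join. lia.
        -- intros Hs. destruct t as [[|c l]]; [simpl in Hs; lia|].
           exists (tsize c). pose proof (tsize_pos c). pose proof (tsize_pos (Node l)).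
           assert (Hsz : tsize (join c (Node l)) = S (S m)) by exact Hs.
           rewrite tsize_join in Hsz.
           split; [apply in_seq; lia|].
           apply in_flat_map. exists c. split; [apply (IH (tsize c)); auto; lia|].
           apply in_map_iff. exists (Node l). split; [reflexivity|].
           apply (IH (S (S m) - tsize c)); lia.
      * apply NoDup_flat_map.
        -- apply seq_NoDup.
        -- intros k Hk. apply in_seq in Hk. apply NoDup_flat_map.
           ++ apply (IH k); lia.
           ++ intros t1 _. apply NoDup_map_NoDup_ForallPairs; [|apply (IH (S (S m) - k)); lia].
              intros x y _ _ Hxy. apply (join_inj _ _ _ _ Hxy).
           ++ intros x y z _ _ Hx Hy. apply in_map_iff in Hx as [r1 [<- _]].
              apply in_map_iff in Hy as [r2 [H _]]. symmetry in H. apply (join_inj _ _ _ _ H).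
        -- intros k k' z Hk Hk' Hz Hz'. apply in_seq in Hk. apply in_seq in Hk'.
           apply in_flat_map in Hz as [t1 [Ht1 Hz]]. apply in_map_iff in Hz as [r1 [<- _]].
           apply in_flat_map in Hz' as [t2 [Ht2 Hz']]. apply in_map_iff in Hz' as [r2 [H _]].
           apply join_inj in H as [<- _].
           apply (IH k) in Ht1; [|lia]. apply (IH k') in Ht2; [|lia]. lia.
Qed.

Definition sumL (f : ptree -> nat) (l : list ptree) : nat := fold_right (fun t acc => f t + acc) 0 l.
Definition Tot (f : ptree -> nat) (n : nat) : nat := sumL f (enum n n).

Lemma sumL_perm f l l' : Permutation l l' -> sumL f l = sumL f l'.
Proof. induction 1; unfold sumL in *; simpl; lia. Qed.

Lemma sumL_any f n fu L : n <= fu -> NoDup L -> (forall t, In t L <-> tsize t = n) ->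
  sumL f L = sumL f (enum fu n).
Proof.
  intros Hn HL HI. destruct (enum_ok fu n Hn) as [HI' HN].
  apply sumL_perm, NoDup_Permutation; auto. intros t. rewrite HI, HI'. tauto.
Qed.

Lemma Tot_any f n L : NoDup L -> (forall t, In t L <-> tsize t = n) -> sumL f L = Tot f n.
Proof. intros; apply sumL_any; auto. Qed.

Definition seqsum (g : nat -> nat) (l : list nat) : nat := fold_right (fun k acc => g k + acc) 0 l.
Definition DS (G : ptree -> ptree -> nat) (n : nat) : nat :=
  seqsum (fun k => sumL (fun t => sumL (fun r => G t r) (enum (n - k) (n - k))) (enum k k)) (seq 1 (n - 1)).
Definition conv (a b : nat -> nat) (n : nat) : nat := seqsum (fun k => a k * b (n - k)) (seq 1 (n - 1)).

Lemma sumL_flat_map {A} f (g : A -> list ptree) l :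
  sumL f (flat_map g l) = fold_right (fun x acc => sumL f (g x) + acc) 0 l.
Proof. induction l; simpl; [reflexivity|]. unfold sumL at 1. rewrite fold_sum_app. rewrite <- IHl. reflexivity. Qed.

Lemma enum_unfold fu n : 2 <= n -> enum (S fu) n =
  flat_map (fun k => flat_map (fun t => map (join t) (enum fu (n - k))) (enum fu k)) (seq 1 (n - 1)).
Proof. intros H; destruct n as [|[|m]]; [lia|lia|reflexivity]. Qed.

Lemma Tot_decomp F n : 2 <= n -> Tot F n = DS (fun t r => F (join t r)) n.
Proof.
  intros Hn. destruct n as [|[|m]]; [lia|lia|].
  unfold Tot, DS. rewrite enum_unfold by lia.
  rewrite sumL_flat_map. unfold seqsum. apply fold_sum_ext_in. intros k Hk. apply in_seq in Hk.
  rewrite sumL_flat_map. rewrite (sumL_any _ k (S m) (enum k k)); [| lia | apply (enum_ok k k); lia | apply (enum_ok k k); lia].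
  unfold sumL at 2. apply fold_sum_ext_in. intros t _.
  unfold sumL at 1. rewrite fold_sum_map. fold (sumL (fun r => F (join t r)) (enum (S m) (S (S m) - k))).
  symmetry. apply sumL_any; [lia| apply (enum_ok _ _ (le_n _)) | apply (enum_ok _ _ (le_n _))].
Qed.

Lemma DS_ext G K n : (forall t r, G t r = K t r) -> DS G n = DS K n.
Proof.
  intros E. unfold DS, seqsum. apply fold_sum_ext. intros k. unfold sumL. apply fold_sum_ext. intros t.
  apply fold_sum_ext. intros r. apply E.
Qed.

Lemma DS_plus G K n : DS (fun t r => G t r + K t r) n = DS G n + DS K n.
Proof.
  unfold DS, seqsum. rewrite <- fold_sum_plus. apply fold_sum_ext. intros k. unfold sumL.
  rewrite <- fold_sum_plus. apply fold_sum_ext. intros t. apply fold_sum_plus.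
Qed.

Lemma DS_prod a b n : DS (fun t r => a t * b r) n = conv (Tot a) (Tot b) n.
Proof.
  unfold DS, conv, seqsum, Tot. apply fold_sum_ext. intros k. unfold sumL.
  rewrite <- fold_sum_mulr. apply fold_sum_ext. intros t. apply fold_sum_mull.
Qed.

Lemma Tot_decomp_eq F G K n : 2 <= n -> (forall t r, F (join t r) + G t r = K t r) ->
  Tot F n + DS G n = DS K n.
Proof.
  intros Hn E. rewrite Tot_decomp by auto. rewrite <- DS_plus. apply DS_ext. auto.
Qed.

Lemma Tot_0 f : Tot f 0 = 0.
Proof. reflexivity. Qed.
Lemma Tot_1 f : Tot f 1 = f (Node []) .
Proof. unfold Tot, sumL. simpl. lia. Qed.

Ltac dsfin := repeat rewrite DS_plus; repeat rewrite DS_prod.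

Lemma rec_T n : 2 <= n -> Tot Tst n = conv (Tot Tst) (Tot Tst) n.
Proof.
  intros Hn. rewrite Tot_decomp by auto.
  rewrite (DS_ext _ (fun t r => Tst t * Tst r)) by reflexivity. apply DS_prod.
Qed.

Lemma rec_S n : 2 <= n -> Tot Sst n = 0.
Proof.
  intros Hn. rewrite Tot_decomp by auto.
  rewrite (DS_ext _ (fun t r => 0 * Tst r)) by (intros t [f]; reflexivity).
  rewrite DS_prod. unfold conv, seqsum. rewrite (fold_sum_ext _ (fun _ => 0)).
  - rewrite fold_sum_const. lia.
  - intros k. unfold Tot, sumL. rewrite fold_sum_const. lia.
Qed.

Lemma rec_L n : 2 <= n -> Tot Lst n + conv (Tot Tst) (Tot Sst) n =
  conv (Tot Lst) (Tot Tst) n + conv (Tot Tst) (Tot Lst) n.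
Proof.
  intros Hn. rewrite <- !DS_prod, <- DS_plus. apply Tot_decomp_eq; auto.
  intros t r. destruct (stat_join t r) as [E _]. unfold Tst. lia.
Qed.

Lemma rec_H n : 2 <= n -> Tot Hst n =
  conv (Tot Hst) (Tot Tst) n + conv (Tot Lst) (Tot Tst) n + conv (Tot Tst) (Tot Hst) n.
Proof.
  intros Hn. rewrite <- !DS_prod, <- !DS_plus. rewrite Tot_decomp by auto. apply DS_ext.
  intros t r. destruct (stat_join t r) as [_ [E _]]. unfold Tst. lia.
Qed.

Lemma rec_P n : 2 <= n -> Tot Pst n + conv (Tot Lst) (Tot Sst) n =
  conv (Tot Pst) (Tot Tst) n + conv (Tot Tst) (Tot Pst) n + conv (Tot Lst) (Tot Lst) n.
Proof.
  intros Hn. rewrite <- !DS_prod, <- !DS_plus. apply Tot_decomp_eq; auto.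
  intros t r. destruct (stat_join t r) as [_ [_ [E _]]]. unfold Tst. lia.
Qed.

Lemma rec_D n : 2 <= n -> Tot Dst n + conv (Tot Hst) (Tot Sst) n + conv (Tot Lst) (Tot Sst) n =
  conv (Tot Dst) (Tot Tst) n + conv (Tot Tst) (Tot Dst) n + conv (Tot Hst) (Tot Lst) n
  + conv (Tot Lst) (Tot Lst) n + conv (Tot Lst) (Tot Hst) n.
Proof.
  intros Hn. rewrite <- !DS_prod, <- !DS_plus. rewrite <- Nat.add_assoc, <- DS_plus.
  apply Tot_decomp_eq; auto.
  intros t r. destruct (stat_join t r) as [_ [_ [_ E]]]. unfold Tst. lia.
Qed.

Lemma Tot_P3 : Tot Pst 3 = 1.
Proof. vm_compute. reflexivity. Qed.
From mathcomp Require all_boot all_algebra ring lra.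
Module GF.
Import all_boot all_algebra ring lra.
Import GRing.Theory Num.Theory.
Local Open Scope ring_scope.

Definition Zm (N : nat) (p : {poly rat}) := forall i, (i < N)%N -> p`_i = 0.

Lemma Zm_add N p q : Zm N p -> Zm N q -> Zm N (p + q).
Proof. by move=> hp hq i hi; rewrite coefD hp ?hq ?addr0. Qed.
Lemma Zm_opp N p : Zm N p -> Zm N (- p).
Proof. by move=> hp i hi; rewrite coefN hp ?oppr0. Qed.
Lemma Zm_mull N p q : Zm N p -> Zm N (q * p).
Proof.
  move=> hp i hi; rewrite coefM big1 // => j _; rewrite hp ?mulr0 //.
  exact: leq_ltn_trans (leq_subr _ _) hi.
Qed.
Lemma Zm_le M N p : (M <= N)%N -> Zm N p -> Zm M p.
Proof. by move=> hMN hp i hi; apply: hp; exact: leq_trans hi hMN. Qed.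
Lemma Zm_deriv N p : Zm N.+1 p -> Zm N p^`().
Proof. by move=> hp i hi; rewrite coef_deriv hp ?mul0rn. Qed.
Lemma Zm0 N : Zm N 0.
Proof. by move=> i _; rewrite coef0. Qed.

Lemma Zm_eq N p q : p = q -> Zm N q -> Zm N p.
Proof. by move=> ->. Qed.

Lemma coef_c (p : {poly rat}) i : ((1 - 4%:R * 'X) * p)`_i = p`_i - 4%:R * (if i is j.+1 then p`_j else 0).
Proof.
  rewrite mulrBl mul1r -mulrA coefB -polyC_natr coefCM coefXM.
  by case: i.
Qed.

Lemma Zm_cancel N p : Zm N ((1 - 4%:R * 'X) * p) -> Zm N p.
Proof.
  move=> h; elim=> [|i IH] hi.
  - by have := h 0%N hi; rewrite coef_c subr0.
  - have := h i.+1 hi; rewrite coef_c IH ?mulr0 ?subr0 //.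
    exact: ltnW.
Qed.

Definition pN (N : nat) (a : nat -> nat) : {poly rat} := \poly_(i < N) (a i)%:R.


Lemma coef_pN N a i : (pN N a)`_i = if (i < N)%N then (a i)%:R else 0.
Proof. by rewrite coef_poly. Qed.

Lemma seq_iota m n : List.seq m n = iota m n.
Proof. by elim: n m => //= n IH m; rewrite IH. Qed.

Lemma seqsum_big g l : seqsum g l = (\sum_(k <- l) g k)%N.
Proof. by elim: l => [|x l IH]; rewrite ?big_nil ?big_cons //= IH. Qed.

Lemma conv_big a b n : a 0%N = 0%N -> b 0%N = 0%N ->
  conv a b n = (\sum_(j < n.+1) a j * b (n - j))%N.
Proof.
  move=> a0 b0; rewrite /conv seqsum_big seq_iota.
  case: n => [|m]; first by rewrite big_ord1 a0 big_nil.
  have E1 : Nat.sub m.+1 1 = m by rewrite /= Nat.sub_0_r.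
  rewrite E1.
  have -> : (\sum_(j < m.+2) a j * b (m.+1 - j))%N = (\sum_(i < m) a i.+1 * b (m - i))%N.
  { rewrite big_ord_recr /= subnn b0 muln0 addn0 big_ord_recl /= a0 mul0n add0n.
    apply: eq_bigr => i _. by rewrite /bump /= subSS. }
  rewrite (iotaDl 1 0) big_map -(big_mkord xpredT (fun i => a i.+1 * b (m - i))%N).
  rewrite /index_iota subn0. apply: eq_bigr => i _. reflexivity.
Qed.

Lemma coef_pNM N a b i : a 0%N = 0%N -> b 0%N = 0%N -> (i < N)%N ->
  (pN N a * pN N b)`_i = (conv a b i)%:R.
Proof.
  move=> a0 b0 hi; rewrite coefM conv_big // natr_sum; apply: eq_bigr => j _.
  rewrite !coef_pN natrM.
  have hj : (j < N)%N by apply: leq_ltn_trans hi; rewrite -ltnS.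
  have hij : (i - j < N)%N by apply: leq_ltn_trans hi; exact: leq_subr.
  by rewrite hj hij.
Qed.

Lemma eqb1 k : (if Nat.eqb k 1 then 1%N else 0%N) = ((k == 1%N) : nat).
Proof. by case: k => [|[|k]]. Qed.

Lemma pN_X N S : (1 < N)%N -> (forall k, S k = if Nat.eqb k 1 then 1%N else 0%N) -> pN N S = 'X.
Proof.
  move=> hN hS'; have hS : forall k, S k = (k == 1%N) :> nat by move=> k; rewrite hS' eqb1.
  apply/polyP => k; rewrite coef_pN coefX hS.
  case: ifP => // /negbT; rewrite -leqNgt => hk.
  have /negbTE -> : k != 1%N by apply/eqP => e; move: hk; rewrite e leqNgt hN.
  by [].
Qed.

Section Main.
Variables (T S L H P D : nat -> nat).
Hypotheses (T0 : T 0%N = 0%N) (S0 : S 0%N = 0%N) (L0 : L 0%N = 0%N)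
  (H0 : H 0%N = 0%N) (P0 : P 0%N = 0%N) (D0 : D 0%N = 0%N).
Hypothesis hS : forall k, S k = if Nat.eqb k 1 then 1%N else 0%N.
Hypothesis hT : forall k, T k = (if Nat.eqb k 1 then 1%N else 0%N) + conv T T k.
Hypothesis hL : forall k, L k + conv T S k = (if Nat.eqb k 1 then 1%N else 0%N) + conv L T k + conv T L k.
Hypothesis hH : forall k, H k = conv H T k + conv L T k + conv T H k.
Hypothesis hP : forall k, P k + conv L S k = conv P T k + conv T P k + conv L L k.
Hypothesis hD : forall k, D k + conv H S k + conv L S k =
  conv D T k + conv T D k + conv H L k + conv L L k + conv L H k.

Variable N : nat.
Hypothesis hN : (1 < N)%N.

Let pT := pN N T.
Let pS := pN N S.
Let pL := pN N L.
Let pH := pN N H.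
Let pP := pN N P.
Let pD := pN N D.

Ltac natc := move/(congr1 (fun x : nat => x%:R : rat)); rewrite ?natrD.

Lemma ZT : Zm N (pT - 'X - pT * pT).
Proof.
  move=> k hk; rewrite !coefB coefX coef_pNM // coef_pN hk.
  have := hT k; rewrite eqb1; natc. lra.
Qed.

Lemma ZL : Zm N (pL + pT * 'X - 'X - pL * pT - pT * pL).
Proof.
  move=> k hk. rewrite -(pN_X _ _ hN hS) !coefB coefD !coef_pNM // !coef_pN hk hS.
  have := hL k; rewrite eqb1; natc. lra.
Qed.

Lemma ZH : Zm N (pH - pH * pT - pL * pT - pT * pH).
Proof.
  move=> k hk. rewrite !coefB !coef_pNM // coef_pN hk.
  have := hH k; natc. lra.
Qed.

Lemma ZP : Zm N (pP + pL * 'X - pP * pT - pT * pP - pL * pL).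
Proof.
  move=> k hk. rewrite -(pN_X _ _ hN hS) !coefB coefD !coef_pNM // coef_pN hk.
  have := hP k; natc. lra.
Qed.

Lemma ZD : Zm N (pD + pH * 'X + pL * 'X - pD * pT - pT * pD - pH * pL - pL * pL - pL * pH).
Proof.
  move=> k hk. rewrite -(pN_X _ _ hN hS) !coefB !coefD !coef_pNM // coef_pN hk.
  have := hD k; natc. lra.
Qed.


Lemma ZE : Zm N ((pD - pP) * (1 - 4%:R * 'X) * (1 - 4%:R * 'X) - 'X * 'X * 'X).
Proof.
  have zT := ZT; have zL := ZL; have zH := ZH; have zP := ZP; have zD := ZD.
  set eT := pT - 'X - pT * pT in zT.
  set eL := pL + pT * 'X - 'X - pL * pT - pT * pL in zL.
  set eH := pH - pH * pT - pL * pT - pT * pH in zH.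
  set eP := pP + pL * 'X - pP * pT - pT * pP - pL * pL in zP.
  set eD := pD + pH * 'X + pL * 'X - pD * pT - pT * pD - pH * pL - pL * pL - pL * pH in zD.
  pose c := 1 - 4%:R * 'X : {poly rat}.
  pose u := 1 - 2%:R * pT.
  apply: (Zm_eq _ _ (4%:R * (pD - pP) * (c + u * u) * eT + u * u * u * eD - u * u * u * eP
     + (2%:R * eL + 'X) * u * eH + 2%:R * pL * pT * u * eL + 'X * pT * eL + 'X * 'X * eT)).
  - rewrite /eT /eL /eH /eP /eD /c /u. ring.
  - repeat (apply: Zm_add || apply: Zm_opp); apply: Zm_mull; assumption.
Qed.

Lemma ZA : Zm N (pP * (1 - 2%:R * pT) * (1 - 2%:R * pT) * (1 - 2%:R * pT) - 'X * 'X * 'X).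
Proof.
  have zT := ZT; have zL := ZL; have zP := ZP.
  set eT := pT - 'X - pT * pT in zT.
  set eL := pL + pT * 'X - 'X - pL * pT - pT * pL in zL.
  set eP := pP + pL * 'X - pP * pT - pT * pP - pL * pL in zP.
  pose u := 1 - 2%:R * pT.
  apply: (Zm_eq _ _ (u * u * eP + (eL + 'X * pT) * eL + 'X * (1 - pT) * eL + 'X * 'X * eT)).
  - rewrite /eT /eL /eP /u. ring.
  - repeat (apply: Zm_add || apply: Zm_opp); apply: Zm_mull; assumption.
Qed.

Lemma ZPode : Zm N.-1 ((1 - 4%:R * 'X) *
   ('X * (1 - 4%:R * 'X) * pP^`() - (3%:R - 6%:R * 'X) * pP)).
Proof.
  have eN : N = N.-1.+1 by rewrite prednK // ltnW.
  have zA := ZA. have zT := ZT.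
  set A := pP * (1 - 2%:R * pT) * (1 - 2%:R * pT) * (1 - 2%:R * pT) - 'X * 'X * 'X in zA.
  set eT := pT - 'X - pT * pT in zT.
  have zA' : Zm N.-1 A^`() by apply: Zm_deriv; rewrite -eN.
  have zT' : Zm N.-1 eT^`() by apply: Zm_deriv; rewrite -eN.
  have zA1 : Zm N.-1 A by apply: Zm_le zA; exact: leq_pred.
  have zT1 : Zm N.-1 eT by apply: Zm_le zT; exact: leq_pred.
  have dA : A^`() = pP^`() * (1 - 2%:R * pT) * (1 - 2%:R * pT) * (1 - 2%:R * pT)
     - 6%:R * pP * (1 - 2%:R * pT) * (1 - 2%:R * pT) * pT^`() - 3%:R * 'X * 'X.
  { rewrite /A !derivE. ring. }
  have dT : eT^`() = pT^`() - 1 - 2%:R * pT * pT^`().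
  { rewrite /eT !derivE. ring. }
  rewrite dA in zA'. rewrite dT in zT'.
  pose c := 1 - 4%:R * 'X : {poly rat}.
  pose u := 1 - 2%:R * pT.
  pose B := u * u - c.
  pose P' := pP^`(). pose T' := pT^`().
  apply: (Zm_eq _ _ ('X * u * (P' * u * u * u - 6%:R * pP * u * u * T' - 3%:R * 'X * 'X)
     + 4%:R * 'X * P' * (2%:R * c + B) * eT - 24%:R * 'X * pP * eT
     + 6%:R * 'X * pP * (c + B) * (T' - 1 - 2%:R * pT * T')
     - 12%:R * pP * (2%:R * c + B) * eT - 3%:R * u * A)).
  - rewrite /B /c /u /eT /A /P' /T'. ring.
  - repeat (apply: Zm_add || apply: Zm_opp); apply: Zm_mull; assumption.
Qed.


Lemma coefnM (n : nat) (q : {poly rat}) k : (n%:R * q)`_k = n%:R * q`_k.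
Proof. by rewrite -polyC_natr coefCM. Qed.

Definition e (k : nat) : nat := if (k < 3)%N then 0%N else ((k - 2) * 4 ^ (k - 3))%N.

Lemma expn_pow m n : expn m n = Nat.pow m n.
Proof. elim: n => [|n IH] //. by rewrite expnS IH. Qed.

Lemma e_ge3 k : (3 <= k)%N -> e k = Nat.mul (Nat.sub k 2) (Nat.pow 4 (Nat.sub k 3)).
Proof. move=> hk. by rewrite /e ltnNge hk /= expn_pow. Qed.

Lemma e_rec j : (e j.+3 + 16 * e j.+1 = (j == 0%N) + 8 * e j.+2)%N.
Proof.
  case: j => [|[|j]]; first by []; first by [].
  rewrite /e /= !subSS !subn0 !expnS. ring.
Qed.

Lemma coef_cc (q : {poly rat}) k : (q - 8%:R * ('X * q) + 16%:R * ('X * ('X * q)) - 'X * ('X * 'X))`_k =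
  q`_k - 8%:R * (if k is j.+1 then q`_j else 0) + 16%:R * (if k is j.+2 then q`_j else 0) - (k == 3)%:R.
Proof. rewrite coefB coefD coefB !coefnM !coefXM coefX. case: k => [|[|[|k]]] /=; ring. Qed.

Lemma E_closed : forall k, (k < N)%N -> (D k)%:R - (P k)%:R = (e k)%:R :> rat.
Proof.
  have hE : forall k, (k < N)%N -> (pD - pP)`_k = (D k)%:R - (P k)%:R.
  { by move=> k hk; rewrite coefB !coef_pN hk. }
  have rec : forall k, (k < N)%N -> ((pD - pP) - 8%:R * ('X * (pD - pP))
      + 16%:R * ('X * ('X * (pD - pP))) - 'X * ('X * 'X))`_k = 0.
  { move=> k hk.
    have <- : (pD - pP) * (1 - 4%:R * 'X) * (1 - 4%:R * 'X) - 'X * 'X * 'X =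
      (pD - pP) - 8%:R * ('X * (pD - pP)) + 16%:R * ('X * ('X * (pD - pP))) - 'X * ('X * 'X) by ring.
    exact: ZE k hk. }
  elim/ltn_ind => k IH hk.
  have := rec k hk. rewrite coef_cc.
  case: k IH hk => [|[|[|j]]] IH hk /= h.
  - have a0 := hE 0%N hk. rewrite /e /=. lra.
  - have a0 := hE 1%N hk. have a1 := hE 0%N (ltnW hk).
    have b1 := IH 0%N (ltnSn _) (ltnW hk). rewrite /e /= in b1 *. lra.
  - have a0 := hE 2%N hk. have a1 := hE 1%N (ltnW hk). have a2 := hE 0%N (ltnW (ltnW hk)).
    have b1 := IH 1%N (ltnSn _) (ltnW hk). have b2 := IH 0%N (ltnW (ltnSn _)) (ltnW (ltnW hk)).
    rewrite /e /= in b1 b2 *. lra.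
  - have a0 := hE j.+3 hk. have a1 := hE j.+2 (ltnW hk). have a2 := hE j.+1 (ltnW (ltnW hk)).
    have b1 := IH j.+2 (ltnSn _) (ltnW hk). have b2 := IH j.+1 (ltnW (ltnSn _)) (ltnW (ltnW hk)).
    have := e_rec j. move/(congr1 (fun x : nat => x%:R : rat)). rewrite !natrD !natrM => h2.
    lra.
Qed.

Lemma coefXM1 (q : {poly rat}) k : ('X * q)`_k.+1 = q`_k.
Proof. by rewrite coefXM. Qed.

Lemma P_ode j : (j.+3 < N)%N ->
  ((j + 2) * P j.+2 + 6 * P j.+1 = 3 * P j.+2 + 4 * (j + 1) * P j.+1)%N.
Proof.
  move=> hj.
  have hj' : (j.+2 < N.-1)%N by rewrite -ltnS prednK // ltnW.
  have := Zm_cancel _ _ ZPode (j.+2) hj'.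
  have -> : 'X * (1 - 4%:R * 'X) * pP^`() - (3%:R - 6%:R * 'X) * pP =
     'X * pP^`() - 4%:R * ('X * ('X * pP^`())) - 3%:R * pP + 6%:R * ('X * pP) by ring.
  rewrite !coefD !coefN !coefnM !coefXM1 !coef_deriv !coef_pN.
  rewrite (ltnW hj) (ltnW (ltnW hj)) -!(@mulr_natr _ (P _)%:R).
  move=> h. apply/eqP. rewrite -(eqr_nat rat) !natrD !natrM. apply/eqP.
  apply/eqP; rewrite -subr_eq0; apply/eqP.
  match type of h with ?x = _ => transitivity x end; [ring | exact h].
Qed.


Lemma E_closed_nat k : (k < N)%N -> (D k = P k + e k)%N.
Proof.
  move=> hk; have := E_closed k hk. move/eqP; rewrite subr_eq -natrD eqr_nat addnC. by move/eqP.
Qed.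

End Main.
End GF.

Lemma hS_all k : Tot Sst k = (if Nat.eqb k 1 then 1 else 0).
Proof. destruct k as [|[|m]]; [reflexivity|reflexivity|]. rewrite rec_S by lia. reflexivity. Qed.

Lemma conv_01 a b k : k < 2 -> conv a b k = 0.
Proof. intros; destruct k as [|[|]]; [reflexivity|reflexivity|lia]. Qed.

Lemma main_nat k : 3 <= k ->
  Tot Dst k = Tot Pst k + (k - 2) * 4 ^ (k - 3) /\
  (4 <= k -> (k - 3) * Tot Pst k = (4 * k - 10) * Tot Pst (k - 1)).
Proof.
  intros Hk.
  assert (hT : forall k, Tot Tst k = (if Nat.eqb k 1 then 1 else 0) + conv (Tot Tst) (Tot Tst) k).
  { intros [|[|m]]; [reflexivity|reflexivity|]. rewrite rec_T by lia. reflexivity. }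
  assert (hL : forall k, Tot Lst k + conv (Tot Tst) (Tot Sst) k =
     (if Nat.eqb k 1 then 1 else 0) + conv (Tot Lst) (Tot Tst) k + conv (Tot Tst) (Tot Lst) k).
  { intros [|[|m]]; [reflexivity|reflexivity|]. rewrite rec_L by lia. reflexivity. }
  assert (hH : forall k, Tot Hst k = conv (Tot Hst) (Tot Tst) k + conv (Tot Lst) (Tot Tst) k + conv (Tot Tst) (Tot Hst) k).
  { intros [|[|m]]; [reflexivity|reflexivity|]. rewrite rec_H by lia. reflexivity. }
  assert (hP : forall k, Tot Pst k + conv (Tot Lst) (Tot Sst) k =
     conv (Tot Pst) (Tot Tst) k + conv (Tot Tst) (Tot Pst) k + conv (Tot Lst) (Tot Lst) k).
  { intros [|[|m]]; [reflexivity|reflexivity|]. rewrite rec_P by lia. reflexivity. }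
  assert (hD : forall k, Tot Dst k + conv (Tot Hst) (Tot Sst) k + conv (Tot Lst) (Tot Sst) k =
     conv (Tot Dst) (Tot Tst) k + conv (Tot Tst) (Tot Dst) k + conv (Tot Hst) (Tot Lst) k
     + conv (Tot Lst) (Tot Lst) k + conv (Tot Lst) (Tot Hst) k).
  { intros [|[|m]]; [reflexivity|reflexivity|]. rewrite rec_D by lia. reflexivity. }
  split.
  - assert (E := GF.E_closed_nat (Tot Tst) (Tot Sst) (Tot Lst) (Tot Hst) (Tot Pst) (Tot Dst)
      eq_refl eq_refl eq_refl eq_refl eq_refl eq_refl hS_all hT hL hH hP hD (S k) (ssrbool.introT ssrnat.leP (ltac:(lia) : 2 <= S k)) k
      (ssrnat.leqnn _)).
    rewrite E, GF.e_ge3. reflexivity. apply (ssrbool.introT ssrnat.leP). lia.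
  - intros H4. destruct k as [|[|[|j]]]; try lia.
    assert (E := GF.P_ode (Tot Tst) (Tot Sst) (Tot Lst) (Tot Pst)
      eq_refl eq_refl eq_refl eq_refl hS_all hT hL hP (S (S (S (S (S j))))) (ssrbool.introT ssrnat.leP (ltac:(lia) : 2 <= S (S (S (S (S j)))))) (S j)
      (ssrnat.leqnn _)).
    change (ssrnat.addn (ssrnat.muln (ssrnat.addn (S j) 2) (Tot Pst (S (S (S j)))))
         (ssrnat.muln 6 (Tot Pst (S (S j)))) =
       ssrnat.addn (ssrnat.muln 3 (Tot Pst (S (S (S j)))))
         (ssrnat.muln (ssrnat.muln 4 (ssrnat.addn (S j) 1)) (Tot Pst (S (S j))))) in E.
    replace (S (S (S j)) - 1) with (S (S j)) by lia.
    unfold ssrnat.addn, ssrnat.muln, ssrnat.addn_rec, ssrnat.muln_rec in E. nia.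
Qed.

Lemma dfact_pos m : 1 <= dfact m.
Proof.
  assert (H : forall q, 1 <= dfact q /\ 1 <= dfact (S q)).
  { induction q as [|q IH]; [simpl; lia|]. split; [apply IH|].
    change (dfact (S (S q))) with (S (S q) * dfact q). destruct IH. nia. }
  apply H.
Qed.

Lemma P_closed k : 3 <= k -> Tot Pst k * dfact (2 * k - 4) = 2 * (k - 2) * 4 ^ (k - 3) * dfact (2 * k - 5).
Proof.
  intros Hk. replace k with ((k - 3) + 3) by lia. generalize (k - 3) as j. clear Hk k.
  induction j as [|j IH].
  - change (0 + 3) with 3. rewrite Tot_P3. reflexivity.
  - replace (S j + 3) with (j + 4) by lia.
    destruct (main_nat (j + 4) ltac:(lia)) as [_ Hr]. specialize (Hr ltac:(lia)).
    replace (j + 4 - 3) with (j + 1) in Hr by lia. replace (4 * (j + 4) - 10) with (4 * j + 6) in Hr by lia.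
    replace (j + 4 - 1) with (j + 3) in Hr by lia.
    replace (2 * (j + 3) - 4) with (2 * j + 2) in IH by lia.
    replace (2 * (j + 3) - 5) with (2 * j + 1) in IH by lia.
    replace (j + 3 - 2) with (j + 1) in IH by lia. replace (j + 3 - 3) with j in IH by lia.
    replace (2 * (j + 4) - 4) with (S (S (2 * j + 2))) by lia.
    replace (2 * (j + 4) - 5) with (S (S (2 * j + 1))) by lia.
    replace (j + 4 - 2) with (j + 2) by lia. replace (j + 4 - 3) with (S j) by lia.
    change (dfact (S (S (2 * j + 2)))) with (S (S (2 * j + 2)) * dfact (2 * j + 2)).
    change (dfact (S (S (2 * j + 1)))) with (S (S (2 * j + 1)) * dfact (2 * j + 1)).
    rewrite Nat.pow_succ_r'.
    set (P4 := Tot Pst (j + 4)) in *. set (P3 := Tot Pst (j + 3)) in *.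
    set (B := dfact (2 * j + 2)) in *. set (A := dfact (2 * j + 1)) in *. set (X := 4 ^ j) in *.
    apply (Nat.mul_cancel_l _ _ (j + 1)); [lia|].
    transitivity (S (S (2 * j + 2)) * ((j + 1) * P4) * B); [ring|]. rewrite Hr.
    transitivity (S (S (2 * j + 2)) * (4 * j + 6) * (P3 * B)); [ring|]. rewrite IH. ring.
Qed.

Lemma part1 : forall (n : nat) (L : list ptree),
      (3 <= n)%nat -> NoDup L -> (forall t : ptree, In t L <-> tsize t = n) ->
      expected_leaf_dist L = closed_form n.
Proof.
  intros n L Hn HND HI. unfold expected_leaf_dist, closed_form.
  change (total_dist L) with (sumL Dst L). change (total_pairs L) with (sumL Pst L).
  rewrite (Tot_any Dst n L HND HI), (Tot_any Pst n L HND HI).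
  destruct (main_nat n Hn) as [HD _]. pose proof (P_closed n Hn) as HP.
  rewrite HD. set (p := Tot Pst n) in *. set (e := (n - 2) * 4 ^ (n - 3)) in *.
  set (d4 := dfact (2 * n - 4)) in *. set (d5 := dfact (2 * n - 5)) in *.
  assert (He : p * d4 = 2 * e * d5) by (rewrite HP; unfold e; ring).
  assert (Hd5 : 1 <= d5) by apply dfact_pos.
  assert (Hd4 : 1 <= d4) by apply dfact_pos.
  assert (Hp : p <> 0).
  { intros Hp0. rewrite Hp0 in He. simpl in He.
    assert (1 <= e) by (unfold e; assert (1 <= 4 ^ (n - 3)) by (apply Nat.neq_0_lt_0, Nat.pow_nonzero; lia); nia).
    nia. }
  apply (f_equal INR) in He. rewrite !mult_INR in He. replace (INR 2) with 2%R in He by (simpl; ring).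
  apply not_0_INR in Hp.
  assert (Hd5' : INR d5 <> 0%R) by (apply not_0_INR; lia).
  rewrite plus_INR.
  replace (INR d4) with (2 * INR e * INR d5 / INR p)%R.
  - field. split; auto.
  - rewrite <- He. field. auto.
Qed.

Module Wallis.
Import Coquelicot.
Open Scope R_scope.

Definition Wi (k : nat) : R := RInt (fun x => sin x ^ k) 0 (PI / 2).

Lemma sinpow_derive k x : is_derive (fun x => sin x ^ k) x (INR k * cos x * sin x ^ Nat.pred k).
Proof. apply is_derive_pow, is_derive_sin. Qed.

Lemma cont_sinpow k x : continuous (fun x => sin x ^ k) x.
Proof. apply (ex_derive_continuous (K := R_AbsRing) (V := R_NormedModule)). eexists. apply sinpow_derive. Qed.

Lemma ex_W k : ex_RInt (fun x => sin x ^ k) 0 (PI / 2).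
Proof. apply (ex_RInt_continuous (V := R_CompleteNormedModule)). intros; apply cont_sinpow. Qed.

Lemma W_rec k : INR (k + 2) * Wi (k + 2) = INR (k + 1) * Wi k.
Proof.
  set (F := fun x => - cos x * sin x ^ S k).
  set (df := fun x => INR (k + 2) * sin x ^ (k + 2) - INR (k + 1) * sin x ^ k).
  assert (HD : forall x, is_derive F x (df x)).
  { intros x. unfold F, df. auto_derive; [exact I|].
    replace (k + 2)%nat with (S (S k)) by lia. replace (k + 1)%nat with (S k) by lia.
    rewrite !S_INR. simpl pow. simpl Nat.pred. pose proof (sin2_cos2 x) as E. unfold Rsqr in E.
    change (match k with 0%nat => 1 | S _ => INR k + 1 end) with (INR (S k)). rewrite S_INR.
    match goal with |- ?a = ?b => assert (Z : a - b = -(INR k + 1) * sin x ^ k * (sin x * sin x + cos x * cos x - 1)) by ring end.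
    rewrite E in Z. lra. }
  assert (HI : is_RInt df 0 (PI / 2) (minus (F (PI / 2)) (F 0))).
  { apply (is_RInt_derive (V := R_CompleteNormedModule)).
    - intros; apply HD.
    - intros x _. unfold df. apply (ex_derive_continuous (K := R_AbsRing) (V := R_NormedModule)).
      auto_derive; auto. }
  unfold F in HI. rewrite cos_PI2, cos_0, sin_0 in HI. simpl pow in HI.
  apply (is_RInt_unique (V := R_CompleteNormedModule)) in HI.
  unfold df in HI. rewrite (RInt_minus (fun x => INR (k + 2) * sin x ^ (k + 2)) (fun x => INR (k+1) * sin x ^ k)) in HI.
  - rewrite (RInt_scal (fun x => sin x ^ (k + 2))) in HI by apply ex_W.
    rewrite (RInt_scal (fun x => sin x ^ k)) in HI by apply ex_W.
    unfold Wi. unfold minus, plus, opp, scal in HI; simpl in HI. unfold mult in HI; simpl in HI. lra.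
  - apply (ex_RInt_scal (fun x => sin x ^ (k + 2))), ex_W.
  - apply (ex_RInt_scal (fun x => sin x ^ k)), ex_W.
Qed.

Lemma W_0 : Wi 0 = PI / 2.
Proof.
  unfold Wi. simpl pow. rewrite RInt_const. unfold scal; simpl. unfold mult; simpl. ring.
Qed.

Lemma W_1 : Wi 1 = 1.
Proof.
  unfold Wi.
  assert (HI : is_RInt (fun x => sin x ^ 1) 0 (PI / 2) (minus ((fun x => - cos x) (PI / 2)) ((fun x => - cos x) 0))).
  { apply (is_RInt_derive (V := R_CompleteNormedModule) (fun x => - cos x)).
    - intros x _. auto_derive; [exact I|]. ring.
    - intros x _. apply cont_sinpow. }
  apply (is_RInt_unique (V := R_CompleteNormedModule)) in HI. rewrite HI.
  rewrite cos_PI2, cos_0. unfold minus, plus, opp; simpl. ring.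
Qed.

Lemma W_mono k : Wi (S k) <= Wi k.
Proof.
  unfold Wi. apply RInt_le.
  - pose proof PI_RGT_0; lra.
  - apply ex_W.
  - apply ex_W.
  - intros x Hx. simpl pow.
    assert (0 <= sin x) by (apply sin_ge_0; pose proof PI_RGT_0; lra).
    assert (sin x <= 1) by apply SIN_bound.
    assert (0 <= sin x ^ k) by (apply pow_le; auto).
    nra.
Qed.

Lemma dfact_even m : dfact (2 * m + 2) = ((2 * m + 2) * dfact (2 * m))%nat.
Proof. replace (2 * m + 2)%nat with (S (S (2 * m))) by lia. reflexivity. Qed.

Lemma dfact_odd m : dfact (2 * m + 1) = ((2 * m + 1) * dfact (2 * m - 1))%nat.
Proof.
  destruct m as [|m]; [reflexivity|].
  replace (2 * S m + 1)%nat with (S (S (2 * m + 1))) by lia.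
  replace (2 * S m - 1)%nat with (2 * m + 1)%nat by lia. reflexivity.
Qed.

Lemma W_even m : Wi (2 * m) * INR (dfact (2 * m)) = PI / 2 * INR (dfact (2 * m - 1)).
Proof.
  induction m as [|m IH].
  - simpl. rewrite W_0. ring.
  - replace (2 * S m)%nat with (2 * m + 2)%nat by lia.
    replace (2 * m + 2 - 1)%nat with (2 * m + 1)%nat by lia.
    rewrite dfact_even, dfact_odd, !mult_INR.
    pose proof (W_rec (2 * m)) as R. replace (2 * m + 1)%nat with (2 * m + 1)%nat in R by lia.
    transitivity (INR (2 * m + 2) * Wi (2 * m + 2) * INR (dfact (2 * m))); [ring|].
    rewrite R. transitivity (INR (2 * m + 1) * (Wi (2 * m) * INR (dfact (2 * m)))); [ring|].
    rewrite IH. ring.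
Qed.

Lemma W_odd m : Wi (2 * m + 1) * INR (dfact (2 * m + 1)) = INR (dfact (2 * m)).
Proof.
  induction m as [|m IH].
  - simpl. rewrite W_1. simpl. ring.
  - replace (2 * S m + 1)%nat with (2 * m + 1 + 2)%nat by lia.
    replace (2 * S m)%nat with (2 * m + 2)%nat by lia.
    replace (dfact (2 * m + 1 + 2)) with ((2 * m + 1 + 2) * dfact (2 * m + 1))%nat
      by (replace (2 * m + 1 + 2)%nat with (S (S (2 * m + 1))) by lia; reflexivity).
    rewrite dfact_even, !mult_INR.
    pose proof (W_rec (2 * m + 1)) as R.
    transitivity (INR (2 * m + 1 + 2) * Wi (2 * m + 1 + 2) * INR (dfact (2 * m + 1))); [ring|].
    rewrite R. replace (2 * m + 1 + 1)%nat with (2 * m + 2)%nat by lia.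
    transitivity (INR (2 * m + 2) * (Wi (2 * m + 1) * INR (dfact (2 * m + 1)))); [ring|].
    rewrite IH. ring.
Qed.

Lemma dfact_pos' m : (1 <= dfact m)%nat.
Proof.
  assert (H : forall q, (1 <= dfact q)%nat /\ (1 <= dfact (S q))%nat).
  { induction q as [|q IH]; [simpl; lia|]. split; [apply IH|].
    change (dfact (S (S q))) with (S (S q) * dfact q)%nat. destruct IH. nia. }
  apply H.
Qed.

Lemma dfact_posR m : 0 < INR (dfact m).
Proof. apply lt_0_INR. pose proof (dfact_pos' m). lia. Qed.

Definition wv (m : nat) : R := INR (dfact (2 * m)) / INR (dfact (2 * m - 1)).

Lemma wv_pos m : 0 < wv m.
Proof. unfold wv. apply Rdiv_lt_0_compat; apply dfact_posR. Qed.

Lemma wv_rec m : wv (S m) = wv m * (2 * INR m + 2) / (2 * INR m + 1).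
Proof.
  unfold wv. replace (2 * S m)%nat with (2 * m + 2)%nat by lia.
  replace (2 * m + 2 - 1)%nat with (2 * m + 1)%nat by lia.
  rewrite dfact_even, dfact_odd, !mult_INR, !plus_INR, !mult_INR. simpl (INR 2). simpl (INR 1).
  pose proof (dfact_posR (2 * m)). pose proof (dfact_posR (2 * m - 1)). pose proof (pos_INR m).
  field. repeat split; lra.
Qed.

Lemma crude k : PI * (INR k + 1) <= wv (S k) ^ 2 <= PI * (INR k + 1 + /2).
Proof.
  pose proof (W_even (S k)) as E2. pose proof (W_odd k) as E1. pose proof (W_odd (S k)) as E3.
  pose proof (W_mono (2 * k + 1)) as M1. pose proof (W_mono (2 * k + 2)) as M2.
  replace (2 * S k)%nat with (2 * k + 2)%nat in E2 by lia.
  replace (2 * k + 2 - 1)%nat with (2 * k + 1)%nat in E2 by lia.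
  replace (2 * S k + 1)%nat with (S (2 * k + 2))%nat in E3 by lia.
  replace (2 * S k)%nat with (2 * k + 2)%nat in E3 by lia.
  replace (S (2 * k + 1)) with (2 * k + 2)%nat in M1 by lia.
  replace (dfact (S (2 * k + 2))) with ((2 * k + 3) * dfact (2 * k + 1))%nat in E3
    by (replace (S (2 * k + 2)) with (S (S (2 * k + 1))) by lia;
        change (dfact (S (S (2 * k + 1)))) with (S (S (2 * k + 1)) * dfact (2 * k + 1))%nat; f_equal; lia).
  assert (I2 : INR (2 * k + 2) = 2 * INR k + 2) by (rewrite plus_INR, mult_INR; simpl; ring).
  assert (I3 : INR (2 * k + 3) = 2 * INR k + 3) by (rewrite plus_INR, mult_INR; simpl; ring).
  rewrite dfact_even in E2. rewrite dfact_even in E3.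
  rewrite !mult_INR, I2 in E2. rewrite !mult_INR, I2, I3 in E3.
  unfold wv. replace (2 * S k)%nat with (2 * k + 2)%nat by lia.
  replace (2 * k + 2 - 1)%nat with (2 * k + 1)%nat by lia.
  rewrite dfact_even, mult_INR, I2.
  set (c := INR (dfact (2 * k))) in *. set (b := INR (dfact (2 * k + 1))) in *.
  set (X1 := Wi (S (2 * k + 2))) in *. set (X2 := Wi (2 * k + 2)) in *. set (X3 := Wi (2 * k + 1)) in *.
  assert (Hc : 0 < c) by apply dfact_posR. assert (Hb : 0 < b) by apply dfact_posR.
  pose proof (pos_INR k) as Hk.
  set (a := (2 * INR k + 2) * c) in *.
  assert (Ha : 0 < a) by (unfold a; nra).
  replace ((2 * INR k + 2) * c / b) with (a / b) by reflexivity.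
  assert (EX1 : X1 = a / ((2 * INR k + 3) * b)) by (rewrite <- E3; field; lra).
  assert (EX2 : X2 = PI / 2 * b / a) by (apply (Rmult_eq_reg_r a); [rewrite E2; field|]; lra).
  assert (EX3 : X3 = c / b) by (rewrite <- E1; field; lra).
  rewrite EX1, EX2 in M2. rewrite EX2, EX3 in M1.
  split.
  - assert (H : PI / 2 * b / a * (a * b) <= c / b * (a * b)) by (apply Rmult_le_compat_r; [apply Rmult_le_pos; lra|lra]).
    replace (PI / 2 * b / a * (a * b)) with (PI / 2 * b * b) in H by (field; lra).
    replace (c / b * (a * b)) with (c * a) in H by (field; lra).
    replace ((a / b) ^ 2) with (a * a / (b * b)) by (field; lra).
    apply (Rmult_le_reg_r (b * b)); [nra|]. replace (a * a / (b * b) * (b * b)) with (a * a) by (field; lra).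
    assert (H' := Rmult_le_compat_l (2 * INR k + 2) _ _ ltac:(lra) H).
    replace (a * a) with ((2 * INR k + 2) * (c * a)) by (unfold a; ring). lra.
  - assert (H : a / ((2 * INR k + 3) * b) * (a * b * (2 * INR k + 3)) <= PI / 2 * b / a * (a * b * (2 * INR k + 3)))
      by (apply Rmult_le_compat_r; [apply Rmult_le_pos; [apply Rmult_le_pos|]; lra|lra]).
    replace (a / ((2 * INR k + 3) * b) * (a * b * (2 * INR k + 3))) with (a * a) in H by (field; lra).
    replace (PI / 2 * b / a * (a * b * (2 * INR k + 3))) with (PI / 2 * b * b * (2 * INR k + 3)) in H by (field; lra).
    replace ((a / b) ^ 2) with (a * a / (b * b)) by (field; lra).
    apply (Rmult_le_reg_r (b * b)); [nra|]. replace (a * a / (b * b) * (b * b)) with (a * a) by (field; lra).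
    nra.
Qed.

Lemma div_le_l a b c : 0 < b -> a <= c * b -> a / b <= c.
Proof.
  intros Hb H. replace c with (c * b / b) by (field; lra).
  unfold Rdiv. apply Rmult_le_compat_r; [left; apply Rinv_0_lt_compat; lra | exact H].
Qed.

Definition sv (m : nat) : R := wv m ^ 2 / (INR m + /4).

Lemma sv_pos m : 0 < sv m.
Proof.
  unfold sv. pose proof (wv_pos m). pose proof (pos_INR m).
  apply Rdiv_lt_0_compat; [apply pow_lt; lra | lra].
Qed.

Lemma sv_step m : sv m - sv (S m) = sv (S m) / (4 * (INR m + 1) ^ 2 * (4 * INR m + 1)).
Proof.
  unfold sv. rewrite wv_rec, S_INR. pose proof (wv_pos m). pose proof (pos_INR m).
  field. repeat split; try lra; try (apply Rgt_not_eq, pow_lt; lra).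
Qed.

Lemma sv_dec m : sv (S m) <= sv m.
Proof.
  pose proof (sv_step m) as E. pose proof (sv_pos (S m)). pose proof (pos_INR m).
  assert (0 <= sv (S m) / (4 * (INR m + 1) ^ 2 * (4 * INR m + 1))).
  { apply Rdiv_le_0_compat; [lra|]. apply Rmult_lt_0_compat; [|lra].
    apply Rmult_lt_0_compat; [lra|]. apply pow_lt; lra. }
  lra.
Qed.

Lemma sv_1 : sv 1 = 16 / 5.
Proof. unfold sv, wv. simpl. field. Qed.

Lemma sv_le1 m : (1 <= m)%nat -> sv m <= 16 / 5.
Proof.
  induction 1 as [|m Hm IH]; [rewrite sv_1; lra|].
  pose proof (sv_dec m). lra.
Qed.

Lemma h_step m : (1 <= m)%nat -> sv m - sv (S m) <= 1 / INR m ^ 2 - 1 / (INR m + 1) ^ 2.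
Proof.
  intros Hm. rewrite sv_step.
  assert (Hx : 1 <= INR m) by (apply (le_INR 1); exact Hm).
  set (x := INR m) in *.
  pose proof (sv_le1 (S m) ltac:(lia)) as Hs. pose proof (sv_pos (S m)) as Hs0.
  set (y := sv (S m)) in *.
  replace (1 / x ^ 2 - 1 / (x + 1) ^ 2) with ((2 * x + 1) / (x ^ 2 * (x + 1) ^ 2)) by (field; lra).
  apply div_le_l.
  - apply Rmult_lt_0_compat; [|lra]. apply Rmult_lt_0_compat; [lra|]. apply pow_lt; lra.
  - replace ((2 * x + 1) / (x ^ 2 * (x + 1) ^ 2) * (4 * (x + 1) ^ 2 * (4 * x + 1)))
      with (4 * (2 * x + 1) * (4 * x + 1) / x ^ 2) by (field; lra).
    replace y with (y * x ^ 2 / x ^ 2) by (field; lra).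
    unfold Rdiv. apply Rmult_le_compat_r.
    + left. apply Rinv_0_lt_compat, pow_lt. lra.
    + assert (x ^ 2 <= (2 * x + 1) * (4 * x + 1)) by nra.
      assert (0 <= x ^ 2) by nra. nra.
Qed.

Lemma mono_both m M : (1 <= m)%nat -> (m <= M)%nat ->
  sv M <= sv m /\ sv m - 1 / INR m ^ 2 <= sv M - 1 / INR M ^ 2.
Proof.
  intros Hm HM. induction HM as [|M HM IH]; [lra|].
  pose proof (sv_dec M). pose proof (h_step M ltac:(lia)). rewrite S_INR. lra.
Qed.

Lemma squeeze_up (x : R) (m : nat) : (forall M, (m <= M)%nat -> x <= PI + PI / (4 * INR M + 1)) -> x <= PI.
Proof.
  intros H. destruct (Rle_or_lt x PI) as [|Hlt]; [assumption|].
  exfalso. destruct (INR_unbounded (PI / (x - PI))) as [M0 HM0].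
  set (M := Nat.max m M0). specialize (H M (Nat.le_max_l _ _)).
  assert (HM : INR M0 <= INR M) by (apply le_INR, Nat.le_max_r).
  pose proof PI_RGT_0. pose proof (pos_INR M0).
  assert (PI / (4 * INR M + 1) < x - PI).
  { apply (Rmult_lt_reg_r (4 * INR M + 1)); [lra|].
    replace (PI / (4 * INR M + 1) * (4 * INR M + 1)) with PI by (field; lra).
    assert (PI / (x - PI) * (x - PI) = PI) by (field; lra).
    assert (0 < PI / (x - PI)) by (apply Rdiv_lt_0_compat; lra).
    nra. }
  lra.
Qed.

Lemma squeeze_down (x : R) (m : nat) : (forall M, (m <= M)%nat -> PI - PI / (4 * INR M + 1) <= x) -> PI <= x.
Proof.
  intros H. assert (2 * PI - x <= PI); [|lra].
  apply (squeeze_up _ m). intros M HM. specialize (H M HM). lra.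
Qed.

Lemma sv_bounds m : (1 <= m)%nat -> PI <= sv m <= PI + 1 / INR m ^ 2.
Proof.
  intros Hm. pose proof PI_RGT_0.
  assert (Hcr : forall M, (1 <= M)%nat -> PI - PI / (4 * INR M + 1) <= sv M <= PI + PI / (4 * INR M + 1)).
  { intros M HM. destruct M as [|k]; [lia|]. pose proof (crude k) as [C1 C2].
    unfold sv. rewrite S_INR. pose proof (pos_INR k).
    split.
    - replace (PI - PI / (4 * (INR k + 1) + 1)) with (PI * (INR k + 1) / (INR k + 1 + / 4)) by (field; lra).
      unfold Rdiv. apply Rmult_le_compat_r; [left; apply Rinv_0_lt_compat; lra|lra].
    - replace (PI + PI / (4 * (INR k + 1) + 1)) with (PI * (INR k + 1 + / 2) / (INR k + 1 + / 4)) by (field; lra).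
      unfold Rdiv. apply Rmult_le_compat_r; [left; apply Rinv_0_lt_compat; lra|lra]. }
  split.
  - apply (squeeze_down _ m). intros M HM.
    destruct (mono_both m M Hm HM) as [A _]. destruct (Hcr M ltac:(lia)). lra.
  - assert (sv m - 1 / INR m ^ 2 <= PI); [|lra].
    apply (squeeze_up _ m). intros M HM.
    destruct (mono_both m M Hm HM) as [_ B]. destruct (Hcr M ltac:(lia)).
    assert (0 <= 1 / INR M ^ 2).
    { apply Rdiv_le_0_compat; [lra|]. apply pow_lt. apply lt_0_INR. lia. }
    lra.
Qed.

Lemma part2 : exists (C : R) (N : nat), forall n : nat, (N <= n)%nat ->
      Rabs (closed_form n - asymp_main n) <= C / (INR n * sqrt (INR n)).
Proof.
  exists 6, 4%nat. intros n Hn.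
  set (m := (n - 2)%nat).
  assert (Hm : (2 <= m)%nat) by (unfold m; lia).
  assert (HmR : INR m = INR n - 2) by (unfold m; rewrite minus_INR by lia; reflexivity).
  assert (Hx : 4 <= INR n) by (replace 4 with (INR 4) by (simpl; ring); apply le_INR; exact Hn).
  set (x := INR n) in *.
  set (a := wv m).
  assert (Hcf : closed_form n = a / 2 + 1).
  { unfold closed_form, a, wv. replace (2 * n - 4)%nat with (2 * m)%nat by (unfold m; lia).
    replace (2 * n - 5)%nat with (2 * m - 1)%nat by (unfold m; lia).
    pose proof (dfact_posR (2 * m - 1)). field. lra. }
  set (r := sqrt x).
  assert (Hr2 : r * r = x) by (apply sqrt_sqrt; lra).
  assert (Hr : 2 <= r).
  { unfold r. replace 2 with (sqrt 4). apply sqrt_le_1_alt; lra.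
    replace 4 with (2 * 2) by ring. rewrite sqrt_square; lra. }
  pose proof PI_RGT_0 as Hpi. pose proof PI2_3_2 as Hpi3. pose proof PI_4 as Hpi4.
  set (sp := sqrt PI).
  assert (Hsp2 : sp * sp = PI) by (apply sqrt_sqrt; lra).
  assert (Hsp : 1 <= sp).
  { unfold sp. rewrite <- sqrt_1. apply sqrt_le_1_alt; lra. }
  assert (Has : asymp_main n = sp * r / 2 + 1 - 7 * sp / (16 * r)).
  { unfold asymp_main. fold x. fold r. rewrite sqrt_mult by lra. fold sp. reflexivity. }
  set (b := sp * (r - 7 / (8 * r))).
  assert (Hdiff : closed_form n - asymp_main n = (a - b) / 2).
  { rewrite Hcf, Has. unfold b. field. lra. }
  rewrite Hdiff.
  assert (Ha : 0 < a) by apply wv_pos.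
  assert (Hb : r / 2 <= b).
  { unfold b. assert (r / 2 <= r - 7 / (8 * r)).
    { assert (7 / (8 * r) <= r / 2); [|lra].
      apply div_le_l; [lra|]. nra. }
    assert (0 <= r / 2) by lra. nra. }
  destruct (sv_bounds m ltac:(lia)) as [S1 S2].
  assert (Ha2 : a * a = sv m * (INR m + / 4)).
  { unfold sv. fold a. pose proof (pos_INR m). field. lra. }
  assert (Hb2 : b * b = PI * (x - 7 / 4 + 49 / (64 * x))).
  { unfold b. rewrite <- Hsp2, <- Hr2. field. lra. }
  assert (HmR' : 2 <= INR m) by (replace 2 with (INR 2) by (simpl; ring); apply le_INR; exact Hm).
  assert (Hup : a * a - b * b <= 4 / x).
  { rewrite Ha2, Hb2, HmR.
    assert (Hq : (sv m - PI) * (x - 2 + / 4) <= 1 / (x - 2) ^ 2 * (x - 2 + / 4)).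
    { apply Rmult_le_compat_r; [lra|]. rewrite HmR in S2. lra. }
    assert (1 / (x - 2) ^ 2 * (x - 2 + / 4) <= 4 / x - 0).
    { replace (1 / (x - 2) ^ 2 * (x - 2 + / 4)) with ((x - 2 + / 4) / (x - 2) ^ 2) by (field; lra).
      apply div_le_l; [apply pow_lt; lra|].
      replace (4 / x - 0) with (4 / x) by ring.
      replace (4 / x * (x - 2) ^ 2) with (4 * (x - 2) ^ 2 / x) by (field; lra).
      apply (Rmult_le_reg_r x); [lra|].
      replace (4 * (x - 2) ^ 2 / x * x) with (4 * (x - 2) ^ 2) by (field; lra). nra. }
    assert (0 <= PI * (49 / (64 * x))).
    { apply Rmult_le_pos; [lra|]. apply Rdiv_le_0_compat; lra. }
    replace (sv m * (x - 2 + / 4) - PI * (x - 7 / 4 + 49 / (64 * x)))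
      with ((sv m - PI) * (x - 2 + / 4) - PI * (49 / (64 * x))) by (field; lra).
    lra. }
  assert (Hlo : - (4 / x) <= a * a - b * b).
  { rewrite Ha2, Hb2, HmR.
    assert (Hq : 0 <= (sv m - PI) * (x - 2 + / 4)) by (apply Rmult_le_pos; lra).
    assert (PI * (49 / (64 * x)) <= 4 / x).
    { replace (PI * (49 / (64 * x))) with (PI * 49 / 64 / x) by (field; lra).
      unfold Rdiv. apply Rmult_le_compat_r; [left; apply Rinv_0_lt_compat; lra | lra]. }
    replace (sv m * (x - 2 + / 4) - PI * (x - 7 / 4 + 49 / (64 * x)))
      with ((sv m - PI) * (x - 2 + / 4) - PI * (49 / (64 * x))) by (field; lra).
    lra. }
  assert (Hab : 0 < a + b) by lra.
  assert (Hd : a - b = (a * a - b * b) / (a + b)) by (field; lra).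
  assert (Hx0 : 0 < x) by lra.
  assert (Hbound : Rabs ((a * a - b * b) / (a + b)) <= 4 / x / (r / 2)).
  { rewrite Rabs_div by lra. rewrite (Rabs_right (a + b)) by lra.
    assert (Rabs (a * a - b * b) <= 4 / x) by (apply Rabs_le; lra).
    apply Rle_trans with (4 / x / (a + b)).
    - unfold Rdiv. apply Rmult_le_compat_r; [left; apply Rinv_0_lt_compat; lra | exact H].
    - unfold Rdiv. apply Rmult_le_compat_l; [left; apply Rdiv_lt_0_compat; lra|].
      apply Rinv_le_contravar; lra. }
  rewrite <- Hd in Hbound.
  assert (HB : 4 / x / (r / 2) = 8 / (x * r)) by (field; lra).
  rewrite HB in Hbound.
  assert (Hxr : 0 < 1 / (x * r)) by (apply Rdiv_lt_0_compat; nra).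
  replace (8 / (x * r)) with (8 * (1 / (x * r))) in Hbound by (field; lra).
  replace (6 / (x * r)) with (6 * (1 / (x * r))) by (field; lra).
  pose proof (Rle_abs (a - b)). pose proof (Rle_abs (- (a - b))). rewrite Rabs_Ropp in *.
  apply Rabs_le. lra.
Qed.

End Wallis.

Open Scope R_scope.

Theorem corollary3p5 :
  (forall (n : nat) (L : list ptree),
      (3 <= n)%nat ->
      NoDup L ->
      (forall t : ptree, In t L <-> tsize t = n) ->
      expected_leaf_dist L = closed_form n)
  /\
  (exists (C : R) (N : nat), forall n : nat, (N <= n)%nat ->
      Rabs (closed_form n - asymp_main n) <= C / (INR n * sqrt (INR n))).
Proof.
  split; [exact part1 | exact Wallis.part2].
Qed.
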